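(* Let $r,p,\Delta>0$ be fixed integers and suppose that sequences $\{\xi_{s,t}\}_{s,t\ge0}\subseteq\mathbb{N}$ and $\{k_i\}_{i\ge0}\subseteq\mathbb{N}$ satisfy $$k_{s+t+r}=k_s+k_t+p-\Delta\xi_{s,t}\quad\text{for all } s,t\ge0.$$ Then $\xi_{s,0}=\xi_{0,s}$ for all $s\ge0$, and for all $i\ge0$, $0\le j<r$: $$rk_{ir+j}=((i+1)r+j)k_0+(ir+j)p-\Delta\Big(\tau_j+r\sum_{s=0}^{i-1}\xi_{0,sr+j}\Big),$$ where $$\tau_j=j\xi_{0,0}+j\sum_{s=1}^{r-1}(\xi_{0,s+1}-\xi_{1,s})-r\sum_{s=1}^{j-1}(\xi_{0,s+1}-\xi_{1,s}),\quad 0\le j<r.$$ Moreover, for all $a,c\ge0$ and $0\le b,d<r$: if $b+d<r$, then $$\xi_{ar+b,cr+d}=\sum_{s=1}^{b-1}(\xi_{0,s+1}-\xi_{1,s})+\sum_{s=1}^{d-1}(\xi_{0,s+1}-\xi_{1,s})-\sum_{s=1}^{b+d-1}(\xi_{0,s+1}-\xi_{1,s})+\sum_{s=0}^{a+c}\xi_{0,sr+b+d}-\sum_{s=0}^{a-1}\xi_{0,sr+b}-\sum_{s=0}^{c-1}\xi_{0,sr+d};$$ and if $b+d\ge r$, then $$\xi_{ar+b,cr+d}=\sum_{s=1}^{b-1}(\xi_{0,s+1}-\xi_{1,s})+\sum_{s=1}^{d-1}(\xi_{0,s+1}-\xi_{1,s})-\sum_{s=1}^{b+d-r-1}(\xi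_{0,s+1}-\xi_{1,s})+\sum_{s=0}^{a+c+1}\xi_{0,sr+b+d-r}-\sum_{s=0}^{a-1}\xi_{0,sr+b}-\sum_{s=0}^{c-1}\xi_{0,sr+d}-\xi_{0,0}-\sum_{s=1}^{r-1}(\xi_{0,s+1}-\xi_{1,s}).$$
   Context: $\mathbb{N}$ includes $0$. A sum $\sum_{i=a}^b$ with $b<a$ is zero. *)

(* Defs.v *)
From mathcomp Require Import all_boot all_order all_algebra.
Set Implicit Arguments. Unset Strict Implicit. Unset Printing Implicit Defensive.
Import Order.TTheory GRing.Theory Num.Theory.
Local Open Scope ring_scope.

Definition dxi (xi : nat -> nat -> nat) (s : nat) : int :=
  (xi 0%N s.+1)%:Z - (xi 1%N s)%:Z.

Definition tau (xi : nat -> nat -> nat) (r j : nat) : int :=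
  (j%:Z) * (xi 0%N 0%N)%:Z
  + (j%:Z) * (\sum_(1 <= s < r) dxi xi s)
  - (r%:Z) * (\sum_(1 <= s < j) dxi xi s).

(* Main.v *)
Require Import Defs.
From mathcomp Require Import all_boot all_order all_algebra.
From mathcomp Require Import zify ring.
Import Order.TTheory GRing.Theory Num.Theory.
Local Open Scope ring_scope.

Theorem lemma2p7 (r p Delta : nat) (xi : nat -> nat -> nat) (k : nat -> nat) :
  (0 < r)%N -> (0 < p)%N -> (0 < Delta)%N ->
  (forall s t : nat,
      (k (s + t + r)%N)%:Z = (k s)%:Z + (k t)%:Z + p%:Z - Delta%:Z * (xi s t)%:Z) ->
  (forall s : nat, xi s 0%N = xi 0%N s)
  /\ (forall i j : nat, (j < r)%N ->
        r%:Z * (k (i * r + j)%N)%:Z =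
          ((i.+1 * r + j)%N)%:Z * (k 0%N)%:Z + ((i * r + j)%N)%:Z * p%:Z
          - Delta%:Z * (tau xi r j
                        + r%:Z * (\sum_(0 <= s < i) (xi 0%N (s * r + j)%N)%:Z)))
  /\ (forall a b c d : nat, (b < r)%N -> (d < r)%N ->
        ((b + d < r)%N ->
         (xi (a * r + b)%N (c * r + d)%N)%:Z =
           \sum_(1 <= s < b) dxi xi s + \sum_(1 <= s < d) dxi xi s
           - \sum_(1 <= s < b + d) dxi xi s
           + \sum_(0 <= s < (a + c).+1) (xi 0%N (s * r + (b + d))%N)%:Z
           - \sum_(0 <= s < a) (xi 0%N (s * r + b)%N)%:Z
           - \sum_(0 <= s < c) (xi 0%N (s * r + d)%N)%:Z)
        /\
        ((r <= b + d)%N ->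
         (xi (a * r + b)%N (c * r + d)%N)%:Z =
           \sum_(1 <= s < b) dxi xi s + \sum_(1 <= s < d) dxi xi s
           - \sum_(1 <= s < b + d - r) dxi xi s
           + \sum_(0 <= s < (a + c).+2) (xi 0%N (s * r + (b + d - r))%N)%:Z
           - \sum_(0 <= s < a) (xi 0%N (s * r + b)%N)%:Z
           - \sum_(0 <= s < c) (xi 0%N (s * r + d)%N)%:Z
           - (xi 0%N 0%N)%:Z
           - \sum_(1 <= s < r) dxi xi s)).
Proof.
move=> r0 p0 D0 H.
have Dn : (Delta%:Z != 0) by rewrite eqz_nat -lt0n.
have sym : forall s t, xi s t = xi t s.
  move=> s t; have h1 := H s t; have h2 := H t s.
  rewrite (addnC t s) h1 in h2.
  have : Delta%:Z * (xi s t)%:Z = Delta%:Z * (xi t s)%:Z by lia.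
  by move/(mulfI Dn)/eqP; rewrite eqz_nat => /eqP.
have d0 : dxi xi 0 = 0 by rewrite /dxi sym subrr.
have step : forall s, (k s.+1)%:Z = (k s)%:Z + ((k 1%N)%:Z - (k 0%N)%:Z) + Delta%:Z * dxi xi s.
  move=> s; have h1 := H s 1%N; have h2 := H s.+1 0%N.
  rewrite addn0 addn1 in h1 h2; rewrite h2 in h1; rewrite /dxi (sym 1%N s).
  rewrite (sym s.+1 0%N) in h1; nia.
have S1 : forall j, \sum_(1 <= s < j) dxi xi s = \sum_(0 <= s < j) dxi xi s.
  case=> [|j]; first by rewrite !big_geq.
  by rewrite [RHS]big_ltn // d0 add0r.
have Kj : forall j, (k j)%:Z = (k 0%N)%:Z + j%:Z * ((k 1%N)%:Z - (k 0%N)%:Z)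
                          + Delta%:Z * \sum_(1 <= s < j) dxi xi s.
  move=> j; rewrite S1; elim: j => [|j IH]; first by rewrite big_geq // mul0r mulr0 !addr0.
  rewrite step IH big_nat_recr //= -[j.+1]addn1 PoszD; ring.
have Ki : forall i j, (k (i * r + j)%N)%:Z = (k j)%:Z + i%:Z * ((k 0%N)%:Z + p%:Z)
            - Delta%:Z * \sum_(0 <= s < i) (xi 0%N (s * r + j)%N)%:Z.
  move=> i j; elim: i => [|i IH]; first by rewrite mul0n add0n big_geq // mul0r mulr0 addr0 subr0.
  have -> : (i.+1 * r + j = (i * r + j) + 0 + r)%N by rewrite mulSn; lia.
  rewrite H IH big_nat_recr //= sym -[i.+1]addn1 PoszD; ring.
have E : r%:Z * ((k 1%N)%:Z - (k 0%N)%:Z) = (k 0%N)%:Z + p%:Z - Delta%:Z * (xi 0%N 0%N)%:Z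
            - Delta%:Z * \sum_(1 <= s < r) dxi xi s.
  have h := H 0%N 0%N; rewrite !add0n (Kj r) in h; lia.
split; first by move=> s; rewrite sym.
split.
  move=> i j jr; rewrite Ki Kj /tau !PoszD !PoszM.
  move: E; set u := (_ - _); set S := (\sum_(1 <= s < r) _); set T := (\sum_(1 <= s < j) _);
    set U := (\sum_(0 <= s < i) _) => E.
  have E' : (j%:Z) * (r%:Z * u) = j%:Z * ((k 0%N)%:Z + p%:Z - Delta%:Z * (xi 0%N 0%N)%:Z - Delta%:Z * S)
    by rewrite E.
  nia.
move=> a b c d br dr; split => bd; apply: (mulfI Dn).
  have h := H (a * r + b)%N (c * r + d)%N.
  have e : ((a * r + b) + (c * r + d) + r = (a + c).+1 * r + (b + d))%N by rewrite mulSn; lia.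
  rewrite e (Ki a b) (Ki c d) (Ki (a + c).+1 (b + d)) (Kj b) (Kj d) (Kj (b + d)) in h.
  move: h.
  set A1 := \sum_(1 <= s < b) _; set A2 := \sum_(1 <= s < d) _; set A3 := \sum_(1 <= s < b + d) _;
  set B1 := \sum_(0 <= s < a) _; set B2 := \sum_(0 <= s < c) _; set B3 := \sum_(0 <= s < (a + c).+1) _.
  move=> h.
  rewrite -[(a+c).+1]addn1 !PoszD in h.
  nia.
have h := H (a * r + b)%N (c * r + d)%N.
have e : ((a * r + b) + (c * r + d) + r = (a + c).+2 * r + (b + d - r))%N by rewrite !mulSn; lia.
rewrite e (Ki a b) (Ki c d) (Ki (a + c).+2 (b + d - r)%N) (Kj b) (Kj d) (Kj (b + d - r)%N) in h.
move: h E.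
set A1 := \sum_(1 <= s < b) _; set A2 := \sum_(1 <= s < d) _; set A3 := \sum_(1 <= s < b + d - r) _;
set B1 := \sum_(0 <= s < a) _; set B2 := \sum_(0 <= s < c) _; set B3 := \sum_(0 <= s < (a + c).+2) _;
set S := \sum_(1 <= s < r) _.
move=> h E.
have e2 : ((b + d - r)%N = b%:Z + d%:Z - r%:Z :> int) by rewrite -PoszD; lia.
rewrite -[(a+c).+2]addn2 e2 !PoszD in h.
nia.
Qed.
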